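(* For $n\ge3$ let $C_n$ be the cycle graph with $n$ vertices and let $\mathbb{Z}$ be the one-dimensional integer lattice (the 2-regular graph on $\mathbb{Z}$ with edges $\{k,k+1\}$). Let $\mu$ be the probability measure on $[0,4]$ that is the image of the normalized Lebesgue measure $\frac{dx}{2\pi}$ on $[0,2\pi)$ under the map $x\mapsto 2(1-\cos x)$ (the spectral measure of the Laplacian of $\mathbb{Z}$). Then for every complex $u$ with $|u|<1$, \[ \lim_{n\to\infty}\zeta_{C_n}(u)^{-1}=\zeta_{\mathbb{Z}}(u)^{-1}=\exp\Big(\int\log(1-2u+u^2+\lambda u)\,d\mu(\lambda)\Big), \] where $\log$ is the principal branch.
   Context: For a vertex transitive $(q+1)$-regular graph $G$ and a fixed vertex $x_0$, the generalized Ihara zeta function is $\zeta_G(u)=\exp\big(\sum_{m\ge1}\frac{N^0_m}{m}u^m\big)$, where $N^0_m$ is the number of reduced $x_0$-cycles of length $m$ in $G$. Here a path of length $m$ is a sequence $(e_1,\ldots,e_m)$ of oriented edges with the terminus of $e_i$ equal to the origin of $e_{i+1}$; it has a backtracking if $e_{i+1}=e_i^{-1}$ for some $i$ (the reversed arc); an $x_0$-cycle is a path starting and ending at $x_0$; it has a tail if $e_m=e_1^{-1}$; it is reduced if it has neither a backtracking nor a tail. *)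

(* Defs.v *)
From Stdlib Require Import Reals List ZArith Arith Bool.
From Coquelicot Require Import Coquelicot.
Import ListNotations.
Open Scope R_scope.
Open Scope bool_scope.

(* A locally finite simple graph is given by its vertex type V, a boolean
   equality eqb on V and the neighbour list nb x of each vertex x.
   The oriented edges are the pairs (x,y) with y in nb x, so a path
   (e_1,...,e_m) of length m is the same as a vertex sequence
   [v_0; v_1; ...; v_m] with v_{i+1} in nb v_i, e_i = (v_{i-1}, v_i). *)

Fixpoint walks {V : Type} (nb : V -> list V) (x : V) (m : nat) : list (list V) :=
  match m with
  | O => [[x]]
  | S m' => flat_map (fun y => map (cons x) (walks nb y m')) (nb x)
  end.

(* no backtracking: e_{i+1} <> e_i^{-1}, i.e. v_{i+1} <> v_{i-1} *)
Fixpoint no_backtrack {V : Type} (eqb : V -> V -> bool) (l : list V) : bool :=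
  match l with
  | a :: ((b :: c :: _) as t) => negb (eqb a c) && no_backtrack eqb t
  | _ => true
  end.

(* the x0-cycle [v_0;...;v_m] (v_0 = v_m = x0) has a tail iff
   e_m = e_1^{-1}, i.e. v_{m-1} = v_1 *)
Definition has_tail {V : Type} (eqb : V -> V -> bool) (x0 : V) (m : nat)
    (l : list V) : bool :=
  eqb (nth (m - 1) l x0) (nth 1 l x0).

Definition is_x0_cycle {V : Type} (eqb : V -> V -> bool) (x0 : V) (m : nat)
    (l : list V) : bool :=
  eqb (nth 0 l x0) x0 && eqb (nth m l x0) x0.

Definition N0 {V : Type} (nb : V -> list V) (eqb : V -> V -> bool) (x0 : V)
    (m : nat) : nat :=
  length (filter (fun l => is_x0_cycle eqb x0 m l && no_backtrack eqb l
                           && negb (has_tail eqb x0 m l))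
                 (walks nb x0 m)).

Definition Cexp (z : C) : C := (exp (Re z) * cos (Im z), exp (Re z) * sin (Im z)).

Definition Carg (z : C) : R :=
  if Rle_dec 0 (Im z) then acos (Re z / Cmod z) else - acos (Re z / Cmod z).

Definition Clog (z : C) : C := (ln (Cmod z), Carg z).

Definition CSeries (a : nat -> C) : C :=
  (Series (fun k => Re (a k)), Series (fun k => Im (a k))).

Definition ihara_zeta {V : Type} (nb : V -> list V) (eqb : V -> V -> bool)
    (x0 : V) (u : C) : C :=
  Cexp (CSeries (fun m => match m with
                          | O => 0%C
                          | S _ => ((INR (N0 nb eqb x0 m) / INR m)%R : C) * Cpow u m
                          end)%C).

Definition cycle_nb (n : nat) (k : nat) : list nat :=
  [ (k + 1) mod n ; (k + n - 1) mod n ]%nat.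

Definition Z_nb (k : Z) : list Z := [ (k + 1)%Z ; (k - 1)%Z ].

(* integral against the spectral measure mu of Z, the image of dx/(2 pi) on
   [0, 2 pi) under x |-> 2 (1 - cos x):  int f dmu = (1/2pi) int_0^{2pi} f(2(1-cos x)) dx *)
Definition mu_integral (f : R -> C) : C :=
  scal (/ (2 * PI)) (RInt (V := C_R_CompleteNormedModule)
                          (fun x => f (2 * (1 - cos x))) 0 (2 * PI)).

(* Main.v *)
Require Import Defs.
From Stdlib Require Import Reals List ZArith Arith Lia Lra.
From Coquelicot Require Import Coquelicot.
Import ListNotations.
Open Scope R_scope.

Section Gen.
Context {V : Type} (eqb : V -> V -> bool) (eqb_spec : forall a b, eqb a b = true <-> a = b)
  (nb : V -> list V) (D : V -> Prop) (s p : V -> V)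
  (Hnb : forall x, D x -> nb x = [s x; p x])
  (Ds : forall x, D x -> D (s x)) (Dp : forall x, D x -> D (p x))
  (ps : forall x, D x -> p (s x) = x) (sp : forall x, D x -> s (p x) = x)
  (ss : forall x, D x -> s (s x) <> x) (pp : forall x, D x -> p (p x) <> x).

Fixpoint W (f : V -> V) (x : V) (m : nat) : list V :=
  match m with O => [x] | S m' => x :: W f (f x) m' end.

Lemma filter_map_cons (P : list V -> bool) x L :
  filter P (map (cons x) L) = map (cons x) (filter (fun l => P (x :: l)) L).
Proof. induction L as [|a L IH]; simpl; [reflexivity|]. destruct (P (x :: a)); simpl; now rewrite IH. Qed.

Lemma filter_filter_imp {A} (f g : A -> bool) L :
  (forall l, f l = true -> g l = true) -> filter f L = filter f (filter g L).
Proof. intros H; induction L as [|a L IH]; simpl; [reflexivity|].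
  destruct (f a) eqn:E. rewrite (H a E); simpl; rewrite E; now rewrite IH.
  destruct (g a); simpl; try rewrite E; exact IH. Qed.

Lemma nb_cons x l : no_backtrack eqb (x :: l) = true -> no_backtrack eqb l = true.
Proof. destruct l as [|a [|b r]]; simpl; auto. intros H; apply andb_prop in H; tauto. Qed.

Lemma eqb_refl' x : eqb x x = true. Proof. now apply eqb_spec. Qed.
Lemma eqb_false x y : x <> y -> eqb x y = false.
Proof. intros H; destruct (eqb x y) eqn:E; auto; apply eqb_spec in E; congruence. Qed.

Lemma W_nb f x m : no_backtrack eqb (x :: W f (f x) m) = true ->
  no_backtrack eqb (W f (f x) m) = true.
Proof. apply nb_cons. Qed.

Lemma walks_nb : forall m x, D x ->
  filter (no_backtrack eqb) (walks nb x (S m)) = [W s x (S m); W p x (S m)].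
Proof.
  induction m as [|m IH]; intros x Dx.
  - simpl. rewrite Hnb by auto. reflexivity.
  - change (walks nb x (S (S m))) with
      (flat_map (fun y => map (cons x) (walks nb y (S m))) (nb x)).
    rewrite Hnb by auto. simpl flat_map. rewrite app_nil_r, filter_app, !filter_map_cons.
    rewrite (filter_filter_imp _ (no_backtrack eqb) (walks nb (s x) (S m)))
      by (intros l; apply nb_cons).
    rewrite (filter_filter_imp _ (no_backtrack eqb) (walks nb (p x) (S m)))
      by (intros l; apply nb_cons).
    rewrite !IH by auto.
    assert (A1 : no_backtrack eqb (x :: W s (s x) (S m)) = true). {
      clear IH. revert x Dx. induction m as [|m IHm]; intros x Dx.
      + simpl. rewrite eqb_false; [reflexivity|]; intro E; symmetry in E; eapply ss; eauto. 
      + change (no_backtrack eqb (x :: W s (s x) (S (S m)))) with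
          (negb (eqb x (s (s x))) && no_backtrack eqb (s x :: W s (s (s x)) (S m))).
        rewrite IHm by auto. rewrite eqb_false; [reflexivity|]; intro E; symmetry in E; eapply ss; eauto. }
    assert (A2 : no_backtrack eqb (x :: W p (p x) (S m)) = true). {
      clear IH A1. revert x Dx. induction m as [|m IHm]; intros x Dx.
      + simpl. rewrite eqb_false; [reflexivity|]; intro E; symmetry in E; eapply pp; eauto.
      + change (no_backtrack eqb (x :: W p (p x) (S (S m)))) with
          (negb (eqb x (p (p x))) && no_backtrack eqb (p x :: W p (p (p x)) (S m))).
        rewrite IHm by auto. rewrite eqb_false; [reflexivity|]; intro E; symmetry in E; eapply pp; eauto. }
    assert (A3 : no_backtrack eqb (x :: W p (s x) (S m)) = false). {
      change (W p (s x) (S m)) with (s x :: W p (p (s x)) m). rewrite ps by auto.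
      destruct m; simpl; rewrite eqb_refl'; reflexivity. }
    assert (A4 : no_backtrack eqb (x :: W s (p x) (S m)) = false). {
      change (W s (p x) (S m)) with (p x :: W s (s (p x)) m). rewrite sp by auto.
      destruct m; simpl; rewrite eqb_refl'; reflexivity. }
    cbn [filter]. rewrite A1, A2, A3, A4. reflexivity.
Qed.

Lemma nth_W f x m d : nth m (W f x m) d = Nat.iter m f x.
Proof. revert x; induction m; intros x; simpl; auto. rewrite IHm. now rewrite <- Nat.iter_succ_r. Qed.

Lemma filter_and3 (a b c : list V -> bool) L :
  filter (fun l => a l && b l && c l) L = filter (fun l => a l && c l) (filter b L).
Proof. induction L as [|x L IH]; simpl; auto.
  destruct (b x); simpl; destruct (a x), (c x); simpl; try rewrite IH; auto. Qed.

Lemma N0_le2 x0 m : D x0 -> (Defs.N0 nb eqb x0 (S m) <= 2)%nat.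
Proof.
  intros Dx. unfold Defs.N0.
  rewrite (filter_and3 (fun l => is_x0_cycle eqb x0 (S m) l) (no_backtrack eqb)
     (fun l => negb (has_tail eqb x0 (S m) l))).
  rewrite walks_nb by auto. simpl.
  destruct (_ && _); destruct (_ && _); simpl; lia.
Qed.

Lemma N0_zero x0 m : D x0 -> Nat.iter (S m) s x0 <> x0 -> Nat.iter (S m) p x0 <> x0 ->
  Defs.N0 nb eqb x0 (S m) = 0%nat.
Proof.
  intros Dx H1 H2. unfold Defs.N0.
  rewrite (filter_and3 (fun l => is_x0_cycle eqb x0 (S m) l) (no_backtrack eqb)
     (fun l => negb (has_tail eqb x0 (S m) l))).
  rewrite walks_nb by auto. unfold is_x0_cycle. cbn [filter]. rewrite !nth_W.
  rewrite (eqb_false _ _ H1), (eqb_false _ _ H2). now rewrite !Bool.andb_false_r.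
Qed.
End Gen.

Open Scope R_scope.

Lemma modc n a : (0 < n)%nat -> (a < 2*n)%nat -> a mod n = if (a <? n)%nat then a else (a - n)%nat.
Proof.
  intros Hn Ha. destruct (Nat.ltb_spec a n). apply Nat.mod_small; auto.
  replace a with ((a - n) + 1 * n)%nat at 1 by lia. rewrite Nat.Div0.mod_add. apply Nat.mod_small; lia.
Qed.

Section Cyc.
Variable n : nat. Hypothesis Hn : (3 <= n)%nat.
Let s := fun k => ((k + 1) mod n)%nat.
Let p := fun k => ((k + n - 1) mod n)%nat.
Let D := fun k => (k < n)%nat.

Ltac mc := repeat (rewrite modc; [|lia|]); repeat (match goal with |- context [(?a <? ?b)%nat] => destruct (Nat.ltb_spec a b) end); try lia.

Lemma cyc_facts :
  (forall x, D x -> D (s x)) /\ (forall x, D x -> D (p x)) /\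
  (forall x, D x -> p (s x) = x) /\ (forall x, D x -> s (p x) = x) /\
  (forall x, D x -> s (s x) <> x) /\ (forall x, D x -> p (p x) <> x).
Proof.
  unfold D, s, p; repeat split; intros x Hx.
  - apply Nat.mod_upper_bound; lia.
  - apply Nat.mod_upper_bound; lia.
  - rewrite (modc n (x+1)) by lia. destruct (Nat.ltb_spec (x+1) n); rewrite modc by lia;
    match goal with |- context [(?a <? ?b)%nat] => destruct (Nat.ltb_spec a b) end; lia.
  - rewrite (modc n (x+n-1)) by lia. destruct (Nat.ltb_spec (x+n-1) n); rewrite modc by lia;
    match goal with |- context [(?a <? ?b)%nat] => destruct (Nat.ltb_spec a b) end; lia.
  - rewrite (modc n (x+1)) by lia. destruct (Nat.ltb_spec (x+1) n); rewrite modc by lia;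
    match goal with |- context [(?a <? ?b)%nat] => destruct (Nat.ltb_spec a b) end; lia.
  - rewrite (modc n (x+n-1)) by lia. destruct (Nat.ltb_spec (x+n-1) n); rewrite modc by lia;
    match goal with |- context [(?a <? ?b)%nat] => destruct (Nat.ltb_spec a b) end; lia.
Qed.

Lemma iter_s m : Nat.iter m s 0%nat = (m mod n)%nat.
Proof. induction m. simpl. now rewrite Nat.Div0.mod_0_l.
  rewrite Nat.iter_succ, IHm. unfold s. rewrite Nat.Div0.add_mod_idemp_l. f_equal; lia. Qed.

Lemma iter_p m : Nat.iter m p 0%nat = ((m * (n-1)) mod n)%nat.
Proof. induction m. simpl. now rewrite Nat.Div0.mod_0_l.
  rewrite Nat.iter_succ, IHm. unfold p. replace ((m * (n - 1)) mod n + n - 1)%nat with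
   ((m * (n - 1)) mod n + (n - 1))%nat by lia.
  rewrite Nat.Div0.add_mod_idemp_l. f_equal; lia. Qed.

Lemma cyc_le2 m : (Defs.N0 (cycle_nb n) Nat.eqb 0%nat (S m) <= 2)%nat.
Proof.
  destruct cyc_facts as (H1&H2&H3&H4&H5&H6).
  apply (N0_le2 Nat.eqb Nat.eqb_eq (cycle_nb n) D s p); auto. unfold D; lia.
Qed.

Lemma cyc_zero m : (S m < n)%nat -> Defs.N0 (cycle_nb n) Nat.eqb 0%nat (S m) = 0%nat.
Proof.
  intros Hm. destruct cyc_facts as (H1&H2&H3&H4&H5&H6).
  apply (N0_zero Nat.eqb Nat.eqb_eq (cycle_nb n) D s p); auto. unfold D; lia.
  - rewrite iter_s, Nat.mod_small; lia.
  - rewrite iter_p. replace (S m * (n - 1))%nat with ((n - S m) + m * n)%nat by nia.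
    rewrite Nat.Div0.mod_add, Nat.mod_small; lia.
Qed.
End Cyc.

Lemma Z_zero m : Defs.N0 Z_nb Z.eqb 0%Z (S m) = 0%nat.
Proof.
  apply (N0_zero Z.eqb Z.eqb_eq Z_nb (fun _ => True) (fun k => (k+1)%Z) (fun k => (k-1)%Z));
   auto; try (intros; lia).
  - assert (forall k, Nat.iter k (fun k => (k+1)%Z) 0%Z = Z.of_nat k).
    { induction k. reflexivity. rewrite Nat.iter_succ, IHk. lia. }
    rewrite H. lia.
  - assert (forall k, Nat.iter k (fun k => (k-1)%Z) 0%Z = (- Z.of_nat k)%Z).
    { induction k. reflexivity. rewrite Nat.iter_succ, IHk. lia. }
    rewrite H. lia.
Qed.

Open Scope R_scope.

Lemma sc1 t : sin t ^ 2 + cos t ^ 2 = 1.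
Proof. pose proof (sin2_cos2 t). unfold Rsqr in H. lra. Qed.

Lemma Clog_polar r t : 0 < r -> - PI < t <= PI -> Clog (r * cos t, r * sin t) = (ln r, t).
Proof.
  intros Hr Ht. unfold Clog, Carg, Cmod, Re, Im; simpl fst; simpl snd.
  assert (E : (r * cos t) ^ 2 + (r * sin t) ^ 2 = r ^ 2).
  { replace ((r * cos t) ^ 2 + (r * sin t) ^ 2) with (r^2 * (sin t ^ 2 + cos t ^ 2)) by ring.
    rewrite sc1; ring. }
  rewrite E, sqrt_pow2 by lra.
  replace (r * cos t / r) with (cos t) by (field; lra).
  destruct (Rle_dec 0 (r * sin t)) as [H|H].
  - f_equal. apply acos_cos. split; [|lra].
    destruct (Rle_dec 0 t) as [|H']; auto.
    exfalso. assert (sin t < 0) by (apply sin_lt_0_var; lra). nra.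
  - f_equal. assert (t < 0). { destruct (Rlt_dec t 0); auto. exfalso.
      assert (0 <= sin t) by (apply sin_ge_0; lra). nra. }
    rewrite <- cos_neg, acos_cos by lra. ring.
Qed.

Lemma Cmod_pos_fst z : 0 < fst z -> 0 < Cmod z.
Proof. intros H. unfold Cmod. apply sqrt_lt_R0. nra. Qed.

Lemma polar_rhp z : 0 < fst z ->
  z = (Cmod z * cos (atan (snd z / fst z)), Cmod z * sin (atan (snd z / fst z))).
Proof.
  destruct z as [x y]; simpl fst; simpl snd; intros Hx.
  rewrite cos_atan, sin_atan.
  assert (E : Cmod (x, y) = x * sqrt (1 + (y / x)²)).
  { unfold Cmod; simpl fst; simpl snd.
    replace (x ^ 2 + y ^ 2) with ((x * x) * (1 + (y / x)²)) by (unfold Rsqr; field; lra).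
    rewrite sqrt_mult_alt by nra. rewrite sqrt_square by lra. reflexivity. }
  assert (0 < sqrt (1 + (y / x)²)) by (apply sqrt_lt_R0; pose proof (Rle_0_sqr (y/x)); lra).
  rewrite E. f_equal; field; lra.
Qed.

Lemma Clog_rhp z : 0 < fst z -> Clog z = (ln (Cmod z), atan (snd z / fst z)).
Proof.
  intros H. rewrite (polar_rhp z H) at 1. apply Clog_polar. now apply Cmod_pos_fst.
  pose proof (atan_bound (snd z / fst z)). pose proof PI_RGT_0. lra.
Qed.

Lemma Clog_mult z1 z2 : 0 < fst z1 -> 0 < fst z2 -> Clog (z1 * z2) = (Clog z1 + Clog z2)%C.
Proof.
  intros H1 H2. rewrite (Clog_rhp z1 H1), (Clog_rhp z2 H2).
  rewrite (polar_rhp z1 H1) at 1. rewrite (polar_rhp z2 H2) at 1.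
  set (r1 := Cmod z1). set (r2 := Cmod z2).
  set (t1 := atan (snd z1 / fst z1)). set (t2 := atan (snd z2 / fst z2)).
  assert (0 < r1) by (apply Cmod_pos_fst; auto). assert (0 < r2) by (apply Cmod_pos_fst; auto).
  replace (Cmult (r1 * cos t1, r1 * sin t1) (r2 * cos t2, r2 * sin t2))
    with ((r1 * r2) * cos (t1 + t2), (r1 * r2) * sin (t1 + t2)).
  2:{ unfold Cmult; simpl fst; simpl snd. rewrite cos_plus, sin_plus. f_equal; ring. }
  rewrite Clog_polar. unfold Cplus; simpl. now rewrite ln_mult.
  nra. pose proof (atan_bound (snd z1 / fst z1)). pose proof (atan_bound (snd z2 / fst z2)).
  pose proof PI_RGT_0. unfold t1, t2. lra.
Qed.

Open Scope R_scope.

Definition zt (w : C) (t : R) : C := (1 - RtoC t * w)%C.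

Lemma zt_fst a b t : fst (zt (a,b) t) = 1 - t * a.
Proof. unfold zt; simpl; ring. Qed.
Lemma zt_snd a b t : snd (zt (a,b) t) = - (t * b).
Proof. unfold zt; simpl; ring. Qed.

Lemma ln_sqrt x : 0 < x -> ln (sqrt x) = ln x / 2.
Proof. intros H. rewrite <- (sqrt_sqrt x) at 2 by lra. rewrite ln_mult by (apply sqrt_lt_R0; lra). field. Qed.

Lemma is_derive_eq (f : R -> R) x l1 l2 : is_derive f x l1 -> l1 = l2 -> is_derive f x l2.
Proof. intros H ->; exact H. Qed.

Lemma dR a b t : 0 < 1 - t * a ->
  is_derive (fun t => ln (Cmod (zt (a,b) t))) t (fst (Cmult (Copp (a,b)) (Cinv (zt (a,b) t)))).
Proof.
  intros H.
  apply is_derive_ext with (f := fun t => ln (sqrt ((1 - t*a)^2 + (-(t*b))^2))).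
  { intros s. unfold Cmod. now rewrite zt_fst, zt_snd. }
  unfold Cmult, Cinv, Copp. cbn [fst snd]. rewrite zt_fst, zt_snd.
  assert (HQ : 0 < (1 - t*a)^2 + (-(t*b))^2) by nra.
  auto_derive.
  - split; [nra|]. split; [|exact I]. apply sqrt_lt_R0. nra.
  - set (s := sqrt _). assert (Hs : s * s = (1 - t*a)^2 + (-(t*b))^2).
    { unfold s. rewrite sqrt_sqrt by nra. ring. }
    assert (0 < s) by (apply sqrt_lt_R0; nra).
    rewrite <- Hs. field. lra.
Qed.

Lemma dI a b t : 0 < 1 - t * a ->
  is_derive (fun t => atan (snd (zt (a,b) t) / fst (zt (a,b) t))) t (snd (Cmult (Copp (a,b)) (Cinv (zt (a,b) t)))).
Proof.
  intros H.
  apply is_derive_ext with (f := fun t => atan (- (t*b) / (1 - t*a))).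
  { intros s. now rewrite zt_fst, zt_snd. }
  unfold Cmult, Cinv, Copp. cbn [fst snd]. rewrite zt_fst, zt_snd.
  assert (HQ : 0 < (1 - t*a)^2 + (-(t*b))^2) by nra.
  eapply is_derive_eq.
  apply (is_derive_comp atan (fun t => - (t*b) / (1 - t*a))).
  apply is_derive_atan. auto_derive. lra.
  unfold scal; simpl. unfold mult; simpl. unfold Rsqr. reflexivity. unfold scal; simpl. unfold mult; simpl. unfold Rsqr. field. split; nra.
Qed.

Fixpoint CSt (w : C) (t : R) (N : nat) : C :=
  match N with O => 0%C | S N' => (CSt w t N' + RtoC (t ^ S N' / INR (S N')) * w ^ S N')%C end.
Fixpoint Gt (w : C) (t : R) (N : nat) : C :=
  match N with O => 0%C | S N' => (Gt w t N' + RtoC (t ^ N') * w ^ S N')%C end.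

Lemma fst_RtoC_mult c z : fst (RtoC c * z)%C = c * fst z.
Proof. simpl; ring. Qed.
Lemma snd_RtoC_mult c z : snd (RtoC c * z)%C = c * snd z.
Proof. simpl; ring. Qed.

Lemma fst_Cplus x y : fst (x + y)%C = fst x + fst y. Proof. reflexivity. Qed.
Lemma snd_Cplus x y : snd (x + y)%C = snd x + snd y. Proof. reflexivity. Qed.

Lemma dCSt_fst w N t : is_derive (fun t => fst (CSt w t N)) t (fst (Gt w t N)).
Proof.
  induction N as [|N IH]; simpl CSt; simpl Gt.
  - simpl. auto_derive; auto.
  - apply is_derive_ext with (f := fun t => fst (CSt w t N) + t ^ S N / INR (S N) * fst (w ^ S N)%C).
    { intros s. now rewrite fst_Cplus, fst_RtoC_mult. }
    assert (T : is_derive (fun t => t ^ S N / INR (S N) * fst (w ^ S N)%C) t (t ^ N * fst (w ^ S N)%C)).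
    { eapply is_derive_eq. auto_derive. exact I. reflexivity.
      change (match N with 0%nat => 1 | S _ => INR N + 1 end) with (INR (S N)). match goal with |- ?x = ?y => change (@eq R x y) end. simpl. field. change (INR (S N) <> 0). apply not_0_INR; discriminate. }
    eapply is_derive_eq. apply (is_derive_plus _ _ _ _ _ IH T).
    unfold plus; simpl; ring.
Qed.

Lemma dCSt_snd w N t : is_derive (fun t => snd (CSt w t N)) t (snd (Gt w t N)).
Proof.
  induction N as [|N IH]; simpl CSt; simpl Gt.
  - simpl. auto_derive; auto.
  - apply is_derive_ext with (f := fun t => snd (CSt w t N) + t ^ S N / INR (S N) * snd (w ^ S N)%C).
    { intros s. now rewrite snd_Cplus, snd_RtoC_mult. }
    assert (T : is_derive (fun t => t ^ S N / INR (S N) * snd (w ^ S N)%C) t (t ^ N * snd (w ^ S N)%C)).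
    { eapply is_derive_eq. auto_derive. exact I. reflexivity.
      change (match N with 0%nat => 1 | S _ => INR N + 1 end) with (INR (S N)). match goal with |- ?x = ?y => change (@eq R x y) end. simpl. field. change (INR (S N) <> 0). apply not_0_INR; discriminate. }
    eapply is_derive_eq. apply (is_derive_plus _ _ _ _ _ IH T).
    unfold plus; simpl; ring.
Qed.

Lemma RtoC_pow t N : RtoC (t ^ N) = (RtoC t ^ N)%C.
Proof. induction N; simpl. reflexivity. rewrite <- IHN. unfold RtoC, Cmult; simpl. f_equal; ring. Qed.

Lemma Gt_id w t N : (zt w t * Gt w t N)%C = (w - w * (RtoC t * w) ^ N)%C.
Proof.
  unfold zt. induction N as [|N IH]; simpl Gt.
  - simpl. ring.
  - rewrite Cmult_plus_distr_l, IH, RtoC_pow, !Cpow_mult_l, !Cpow_S. ring.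
Qed.

Lemma mvt_bound (f df : R -> R) M : (forall t, 0 <= t <= 1 -> is_derive f t (df t)) ->
  (forall t, 0 <= t <= 1 -> Rabs (df t) <= M) -> Rabs (f 1 - f 0) <= M.
Proof.
  intros H H0.
  destruct (MVT_gen f 0 1 df) as [c [Hc E]]; simpl in *.
  - intros x; rewrite Rmin_left, Rmax_right by lra; intros; apply H; lra.
  - intros x Hx; rewrite Rmin_left, Rmax_right in Hx by lra.
    apply continuity_pt_filterlim. apply (ex_derive_continuous f). exists (df x). apply H; lra.
  - rewrite Rmin_left, Rmax_right in Hc by lra. rewrite E. rewrite Rminus_0_r, Rmult_1_r. apply H0; auto.
Qed.

Lemma Rabs_fst_le z : Rabs (fst z) <= Cmod z.
Proof. unfold Cmod. pose proof (sqrt_plus_sqr (fst z) (snd z)). pose proof (Rmax_l (Rabs (fst z)) (Rabs (snd z))). lra. Qed.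
Lemma Rabs_snd_le z : Rabs (snd z) <= Cmod z.
Proof. unfold Cmod. pose proof (sqrt_plus_sqr (fst z) (snd z)). pose proof (Rmax_r (Rabs (fst z)) (Rabs (snd z))). lra. Qed.

Lemma zt_lower w t : 0 <= t <= 1 -> 1 - Cmod w <= Cmod (zt w t).
Proof.
  intros Ht. assert (E : (1 : C) = (zt w t + RtoC t * w)%C) by (unfold zt; ring).
  pose proof (Cmod_triangle (zt w t) (RtoC t * w)). rewrite <- E, Cmod_1, Cmod_mult, Cmod_R in H.
  rewrite Rabs_pos_eq in H by lra. pose proof (Cmod_ge_0 w). nra.
Qed.

Lemma dbound w N t : Cmod w < 1 -> 0 <= t <= 1 ->
  Cmod (Cmult (Copp w) (Cinv (zt w t)) + Gt w t N)%C <= Cmod w ^ S N / (1 - Cmod w).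
Proof.
  intros Hw Ht. pose proof (zt_lower w t Ht) as Hl. pose proof (Cmod_ge_0 w) as Hr.
  assert (Hz : zt w t <> 0%C). { intros E. rewrite E, Cmod_0 in Hl. lra. }
  assert (EG : Gt w t N = ((w - w * (RtoC t * w) ^ N) * Cinv (zt w t))%C).
  { rewrite <- Gt_id. field. exact Hz. }
  rewrite EG.
  replace (Cmult (Copp w) (Cinv (zt w t)) + (w - w * (RtoC t * w) ^ N) * Cinv (zt w t))%C
    with (Copp (w * (RtoC t * w) ^ N) * Cinv (zt w t))%C by (field; exact Hz).
  rewrite Cmod_mult, Cmod_opp, Cmod_inv by exact Hz.
  rewrite Cmod_mult, Cmod_pow, Cmod_mult, Cmod_R, Rabs_pos_eq by lra.
  simpl pow. unfold Rdiv.
  apply Rmult_le_compat.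
  - apply Rmult_le_pos; auto. apply pow_le. nra.
  - left; apply Rinv_0_lt_compat. lra.
  - apply Rmult_le_compat_l; auto. apply pow_incr. split; [nra|]. nra.
  - apply Rinv_le_contravar; lra.
Qed.

Lemma CSt_0_fst w N : fst (CSt w 0 N) = 0.
Proof. induction N; simpl CSt. reflexivity. rewrite fst_Cplus, fst_RtoC_mult, IHN. simpl pow. field. change (INR (S N) <> 0). apply not_0_INR; discriminate. Qed.
Lemma CSt_0_snd w N : snd (CSt w 0 N) = 0.
Proof. induction N; simpl CSt. reflexivity. rewrite snd_Cplus, snd_RtoC_mult, IHN. simpl pow. field. change (INR (S N) <> 0). apply not_0_INR; discriminate. Qed.

Lemma tail w N : Cmod w < 1 ->
  Rabs (fst (Clog (zt w 1) + CSt w 1 N)%C) <= Cmod w ^ S N / (1 - Cmod w) /\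
  Rabs (snd (Clog (zt w 1) + CSt w 1 N)%C) <= Cmod w ^ S N / (1 - Cmod w).
Proof.
  intros Hw. pose proof (Rabs_fst_le w) as Ha.
  destruct w as [a b]. simpl fst in Ha.
  assert (Hpos : forall t, 0 <= t <= 1 -> 0 < 1 - t * a).
  { intros t Ht. assert (-1 < a < 1) by (unfold Rabs in Ha; destruct (Rcase_abs a); lra). destruct (Rle_dec 0 a); nra. }
  rewrite Clog_rhp by (rewrite zt_fst; apply Hpos; lra).
  split.
  - pose proof (mvt_bound (fun t => ln (Cmod (zt (a,b) t)) + fst (CSt (a,b) t N))
       (fun t => fst (Cmult (Copp (a,b)) (Cinv (zt (a,b) t))) + fst (Gt (a,b) t N))
       (Cmod (a,b) ^ S N / (1 - Cmod (a,b)))) as H.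
    cbv beta in H. rewrite CSt_0_fst in H.
    replace (ln (Cmod (zt (a, b) 0))) with 0 in H.
    2:{ unfold Cmod. rewrite zt_fst, zt_snd. replace ((1 - 0 * a) ^ 2 + (- (0 * b)) ^ 2) with 1 by ring.
        now rewrite sqrt_1, ln_1. }
    rewrite Rplus_0_r, Rminus_0_r in H. rewrite fst_Cplus. apply H.
    + intros t Ht. apply (is_derive_plus (fun t => ln (Cmod (zt (a,b) t))) (fun t => fst (CSt (a,b) t N))).
      apply dR; auto. apply dCSt_fst.
    + intros t Ht. rewrite <- fst_Cplus. eapply Rle_trans. apply Rabs_fst_le. apply dbound; auto.
  - pose proof (mvt_bound (fun t => atan (snd (zt (a,b) t) / fst (zt (a,b) t)) + snd (CSt (a,b) t N))
       (fun t => snd (Cmult (Copp (a,b)) (Cinv (zt (a,b) t))) + snd (Gt (a,b) t N))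
       (Cmod (a,b) ^ S N / (1 - Cmod (a,b)))) as H.
    cbv beta in H. rewrite CSt_0_snd in H.
    replace (atan (snd (zt (a, b) 0) / fst (zt (a, b) 0))) with 0 in H.
    2:{ rewrite zt_fst, zt_snd. replace (- (0 * b) / (1 - 0 * a)) with 0 by field. now rewrite atan_0. }
    rewrite Rplus_0_r, Rminus_0_r in H. rewrite snd_Cplus. apply H.
    + intros t Ht. apply (is_derive_plus (fun t => atan (snd (zt (a,b) t) / fst (zt (a,b) t))) (fun t => snd (CSt (a,b) t N))).
      apply dI; auto. apply dCSt_snd.
    + intros t Ht. rewrite <- snd_Cplus. eapply Rle_trans. apply Rabs_snd_le. apply dbound; auto.
Qed.

Open Scope R_scope.

Definition ee (x : R) : C := (cos x, sin x).

Lemma epow x k : (ee x ^ k)%C = ee (INR k * x).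
Proof.
  induction k. unfold ee; simpl. rewrite Rmult_0_l, cos_0, sin_0. reflexivity.
  rewrite Cpow_S, IHk. unfold ee, Cmult; simpl fst; simpl snd. rewrite S_INR.
  replace ((INR k + 1) * x) with (x + INR k * x) by ring. rewrite cos_plus, sin_plus.
  f_equal; ring.
Qed.

Lemma Cmod_ee x : Cmod (ee x) = 1.
Proof. unfold Cmod, ee; simpl fst; simpl snd. rewrite Rplus_comm, sc1. apply sqrt_1. Qed.

Lemma is_RInt_eq {V : NormedModule R_AbsRing} (f : R -> V) a b l1 l2 : is_RInt f a b l1 -> l1 = l2 -> is_RInt f a b l2.
Proof. intros H <-; exact H. Qed.

Lemma cos_int k : is_RInt (fun x => cos (INR (S k) * x)) 0 (2 * PI) 0.
Proof.
  assert (Hk : INR (S k) <> 0) by (apply not_0_INR; discriminate).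
  eapply is_RInt_eq.
  - apply (is_RInt_derive (fun x => sin (INR (S k) * x) / INR (S k))).
    + intros x _. eapply is_derive_eq. auto_derive. exact I. reflexivity. match goal with |- ?x = ?y => change (@eq R x y) end. change (match k with 0%nat => 1 | S _ => INR k + 1 end) with (INR (S k)). field. exact Hk.
    + intros x _. apply (ex_derive_continuous (fun x => cos (INR (S k) * x))). auto_derive. exact I.
  - replace (INR (S k) * (2 * PI)) with (0 + 2 * INR (S k) * PI) by ring.
    rewrite sin_period, Rmult_0_r, sin_0. unfold minus, plus, opp; simpl. field. exact Hk.
Qed.

Fixpoint Qs (u : C) (N : nat) (x : R) : C :=
  match N with O => 0%C | S N' => (Qs u N' x + RtoC (2 * cos (INR (S N') * x) / INR (S N')) * u ^ S N')%C end.

Lemma term_int (c : C) N : is_RInt (V := C_R_CompleteNormedModule)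
  (fun x => RtoC (2 * cos (INR (S N) * x) / INR (S N)) * c)%C 0 (2 * PI) (0,0).
Proof.
    destruct c as [p q].
    assert (HN : INR (S N) <> 0) by (apply not_0_INR; discriminate).
    apply (is_RInt_fct_extend_pair (U := R_NormedModule) (V := R_NormedModule)).
    + apply (is_RInt_ext (fun x => scal (2 * p / INR (S N)) (cos (INR (S N) * x)))).
      { intros x _. unfold scal; simpl. unfold mult; simpl. field. exact HN. }
      eapply is_RInt_eq. apply (is_RInt_scal (V := R_NormedModule)). apply cos_int.
      unfold scal; simpl; unfold mult; simpl; ring.
    + apply (is_RInt_ext (fun x => scal (2 * q / INR (S N)) (cos (INR (S N) * x)))).
      { intros x _. unfold scal; simpl. unfold mult; simpl. field. exact HN. }
      eapply is_RInt_eq. apply (is_RInt_scal (V := R_NormedModule)). apply cos_int.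
      unfold scal; simpl; unfold mult; simpl; ring.
Qed.

Lemma Qs_int u N : is_RInt (V := C_R_CompleteNormedModule) (Qs u N) 0 (2 * PI) (0,0).
Proof.
  induction N as [|N IH].
  - simpl. replace (0,0) with (scal (2 * PI - 0) (RtoC 0)). apply (@is_RInt_const C_R_CompleteNormedModule).
    unfold scal; simpl. unfold prod_scal, scal; simpl. unfold mult; simpl. f_equal; ring.
  - replace (0,0) with (@plus C_R_CompleteNormedModule (0,0) (0,0)).
    2:{ unfold plus; simpl. unfold prod_plus, plus; simpl. f_equal; ring. }
    apply (is_RInt_plus (V := C_R_CompleteNormedModule) (Qs u N)); [exact IH|].
    apply (term_int (u ^ S N) N).
Qed.

Lemma CSt_S w t N : CSt w t (S N) = (CSt w t N + RtoC (t ^ S N / INR (S N)) * w ^ S N)%C.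
Proof. reflexivity. Qed.
Lemma Qs_S u N x : Qs u (S N) x = (Qs u N x + RtoC (2 * cos (INR (S N) * x) / INR (S N)) * u ^ S N)%C.
Proof. reflexivity. Qed.

Lemma CSt_sum u N x : (CSt (u * ee x) 1 N + CSt (u * ee (-x)) 1 N)%C = Qs u N x.
Proof.
  induction N as [|N IH].
  - simpl. apply Cplus_0_l.
  - rewrite !CSt_S, Qs_S, <- IH, !Cpow_mult_l, !epow, pow1.
    assert (HN : INR (S N) <> 0) by (apply not_0_INR; discriminate).
    set (A1 := CSt (u * ee x) 1 N). set (A2 := CSt (u * ee (-x)) 1 N). set (k := INR (S N)) in *.
    clearbody A1 A2 k.
    destruct (u ^ S N)%C as [p q]. destruct A1 as [a1 b1]. destruct A2 as [a2 b2].
    replace (k * - x) with (- (k * x)) by ring. unfold ee. rewrite cos_neg, sin_neg.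
    unfold Cplus, Cmult, RtoC; simpl fst; simpl snd.
    f_equal; field; exact HN.
Qed.

Lemma g_decomp u x : (1 - 2 * u + u * u + RtoC (2 * (1 - cos x)) * u)%C = (zt (u * ee x) 1 * zt (u * ee (-x)) 1)%C.
Proof.
  assert (E1 : (ee x * ee (-x))%C = 1%C).
  { unfold ee, Cmult; simpl. rewrite cos_neg, sin_neg. pose proof (sc1 x).
    unfold RtoC. f_equal; nra. }
  assert (E2 : (ee x + ee (-x))%C = RtoC (2 * cos x)).
  { unfold ee, Cplus, RtoC; simpl. rewrite cos_neg, sin_neg. f_equal; ring. }
  transitivity (1 - u * (ee x + ee (-x)) + u * u * (ee x * ee (-x)))%C.
  - rewrite E1, E2. destruct u as [p q]. unfold Cplus, Cminus, Cmult, Copp, RtoC; simpl. f_equal; ring.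
  - unfold zt. rewrite Cmult_1_l. match goal with |- ?a = ?b => change (@eq C a b) end. ring.
Qed.

Lemma Cmod_uee u x : Cmod (u * ee x) = Cmod u.
Proof. rewrite Cmod_mult, Cmod_ee. ring. Qed.

Lemma zt_pos w : Cmod w < 1 -> 0 < fst (zt w 1).
Proof. intros H. pose proof (Rabs_fst_le w). destruct w as [a b]. rewrite zt_fst. simpl fst in H0.
  unfold Rabs in H0; destruct (Rcase_abs a); lra. Qed.

Open Scope R_scope.

Lemma int_zero u : Cmod u < 1 ->
  is_RInt (V := C_R_CompleteNormedModule)
    (fun x => Clog (1 - 2 * u + u * u + RtoC (2 * (1 - cos x)) * u)%C) 0 (2 * PI) (0,0).
Proof.
  intros Hu.
  set (g := fun x => Clog (1 - 2 * u + u * u + RtoC (2 * (1 - cos x)) * u)%C).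
  destruct (filterlim_RInt (U := nat) (V := C_R_CompleteNormedModule)
     (fun N x => opp (Qs u N x)) 0 (2 * PI) eventually _ g (fun _ => (0,0))) as [If [H1 H2]].
  - intros N. eapply is_RInt_eq. apply (is_RInt_opp (V := C_R_CompleteNormedModule)). apply Qs_int.
    unfold opp; simpl. unfold prod_opp, opp; simpl. f_equal; ring.
  - apply filterlim_locally. intros eps.
    set (r := Cmod u) in *. assert (Hr : 0 <= r) by apply Cmod_ge_0.
    assert (Hr1 : Rabs r < 1) by (rewrite Rabs_pos_eq; auto).
    assert (He : 0 < eps * (1 - r) / 2) by (apply Rdiv_lt_0_compat; [apply Rmult_lt_0_compat; [apply cond_pos|lra]|lra]).
    destruct (pow_lt_1_zero r Hr1 _ He) as [N0 HN0].
    exists N0. intros N HN t.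
    assert (HS : r ^ S N < eps * (1 - r) / 2).
    { specialize (HN0 (S N) ltac:(lia)). rewrite Rabs_pos_eq in HN0 by (apply pow_le; auto). exact HN0. }
    assert (Hb : 2 * (r ^ S N / (1 - r)) < eps).
    { apply (Rmult_lt_reg_r (1 - r)). lra. unfold Rdiv. field_simplify; lra. }
    unfold g. rewrite g_decomp, Clog_mult by (apply zt_pos; rewrite Cmod_uee; auto).
    rewrite <- CSt_sum.
    pose proof (tail (u * ee t) N) as T1. pose proof (tail (u * ee (-t)) N) as T2.
    rewrite Cmod_uee in T1, T2. fold r in T1, T2.
    destruct (T1 Hu) as [T1a T1b]. destruct (T2 Hu) as [T2a T2b].
    rewrite fst_Cplus in T1a, T2a. rewrite snd_Cplus in T1b, T2b.
    revert T1a T1b T2a T2b.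
    generalize (Clog (zt (u * ee t) 1)) (Clog (zt (u * ee (- t)) 1)) (CSt (u * ee t) 1 N) (CSt (u * ee (- t)) 1 N).
    intros [c1 c2] [d1 d2] [e1 e2] [f1 f2]; simpl fst; simpl snd; intros T1a T1b T2a T2b.
    split; unfold ball; simpl; unfold AbsRing_ball, abs, minus, plus, opp; simpl.
    + replace (- (e1 + f1) + - (c1 + d1)) with (- ((c1 + e1) + (d1 + f1))) by ring.
      rewrite Rabs_Ropp. eapply Rle_lt_trans; [apply Rabs_triang|lra].
    + replace (- (e2 + f2) + - (c2 + d2)) with (- ((c2 + e2) + (d2 + f2))) by ring.
      rewrite Rabs_Ropp. eapply Rle_lt_trans; [apply Rabs_triang|lra].
  - assert (If = (0,0)).
    { apply (filterlim_locally_unique (F := eventually) (fun _ : nat => (0,0) : C_R_CompleteNormedModule)).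
      exact H1. apply filterlim_const. }
    subst If. exact H2.
Qed.

Open Scope R_scope.

Definition coef (N0f : nat -> nat) (u : C) (m : nat) : C :=
  match m with O => 0%C | S _ => ((INR (N0f m) / INR m)%R : C) * Cpow u m end%C.

Lemma coef_bound (N0f : nat -> nat) u n m : (3 <= n)%nat ->
  (forall k, (N0f (S k) <= 2)%nat) -> (forall k, (S k < n)%nat -> N0f (S k) = 0%nat) ->
  Rabs (fst (coef N0f u m)) <= 2 / INR n * Cmod u ^ m /\
  Rabs (snd (coef N0f u m)) <= 2 / INR n * Cmod u ^ m.
Proof.
  intros Hn H2 H0.
  assert (Hn' : 0 < INR n) by (apply lt_0_INR; lia).
  assert (B0 : 0 <= 2 / INR n * Cmod u ^ m).
  { apply Rmult_le_pos. apply Rlt_le, Rdiv_lt_0_compat; lra. apply pow_le, Cmod_ge_0. }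
  destruct m as [|k].
  - simpl. rewrite Rabs_R0. split; auto.
  - unfold coef. rewrite fst_RtoC_mult, snd_RtoC_mult.
    set (c := INR (N0f (S k)) / INR (S k)).
    assert (Hc0 : 0 <= c) by (apply Rmult_le_pos; [apply pos_INR|apply Rlt_le, Rinv_0_lt_compat, lt_0_INR; lia]).
    assert (Hc : c <= 2 / INR n).
    { unfold c. destruct (Nat.lt_ge_cases (S k) n) as [Hk|Hk].
      - rewrite H0 by auto. simpl. unfold Rdiv. rewrite Rmult_0_l. apply Rlt_le, Rdiv_lt_0_compat; lra.
      - apply le_INR in Hk. pose proof (le_INR _ _ (H2 k)). simpl in H.
        apply Rmult_le_compat. apply pos_INR. apply Rlt_le, Rinv_0_lt_compat; lra. lra.
        apply Rinv_le_contravar; lra. }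
    rewrite !Rabs_mult, (Rabs_pos_eq c Hc0), <- Cmod_pow.
    split; apply Rmult_le_compat; auto using Rabs_pos, Rabs_fst_le, Rabs_snd_le.
Qed.

Lemma series_bound (f : nat -> R) B r : 0 <= r < 1 ->
  (forall m, Rabs (f m) <= B * r ^ m) -> Rabs (Series f) <= B / (1 - r).
Proof.
  intros Hr H.
  assert (Hg : Rabs r < 1) by (rewrite Rabs_pos_eq; lra).
  assert (Eb : ex_series (fun m => B * r ^ m)).
  { apply (ex_series_scal_l (V := R_NormedModule) B (fun m => r ^ m)). now apply ex_series_geom. }
  assert (Ea : ex_series (fun m => Rabs (f m))).
  { apply (ex_series_le (V := R_CompleteNormedModule) _ (fun m => B * r ^ m)); auto.
    intros m. unfold norm; simpl. unfold abs; simpl. rewrite Rabs_Rabsolu. apply H. }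
  eapply Rle_trans. apply Series_Rabs; auto.
  eapply Rle_trans. apply (Series_le _ (fun m => B * r ^ m)); auto. intros m; split; [apply Rabs_pos|apply H].
  rewrite Series_scal_l, Series_geom by auto. unfold Rdiv; lra.
Qed.

Lemma CinvCexp z : Cinv (Cexp z) = (exp (- fst z) * cos (- snd z), exp (- fst z) * sin (- snd z)).
Proof.
  unfold Cexp, Cinv, Re, Im; simpl fst; simpl snd.
  rewrite exp_Ropp, cos_neg, sin_neg.
  pose proof (exp_pos (fst z)). pose proof (sc1 (snd z)).
  replace ((exp (fst z) * cos (snd z)) ^ 2 + (exp (fst z) * sin (snd z)) ^ 2) with (exp (fst z) ^ 2)
    by (replace (exp (fst z) ^ 2) with (exp (fst z) ^ 2 * (sin (snd z) ^ 2 + cos (snd z) ^ 2)) by (rewrite H0; ring); ring).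
  f_equal; field; lra.
Qed.

Lemma lim_C (f : nat -> C) (l : C) : is_lim_seq (fun n => fst (f n)) (fst l) ->
  is_lim_seq (fun n => snd (f n)) (snd l) -> filterlim f eventually (locally l).
Proof.
  intros H1 H2. apply filterlim_locally. intros eps.
  apply is_lim_seq_spec in H1, H2. destruct (H1 eps) as [N1 P1]. destruct (H2 eps) as [N2 P2].
  exists (max N1 N2). intros n Hn. split; unfold ball; simpl; unfold AbsRing_ball, abs, minus, plus, opp; simpl.
  apply P1; lia. apply P2; lia.
Qed.

Lemma lim_inv_n c : is_lim_seq (fun n => c * / INR n) 0.
Proof.
  replace (Finite 0) with (Finite (c * 0)) by (f_equal; ring).
  apply is_lim_seq_mult'. apply is_lim_seq_const.
  replace (Finite 0) with (Rbar_inv p_infty) by reflexivity.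
  apply is_lim_seq_inv. apply is_lim_seq_INR. discriminate.
Qed.

Lemma lim_seq_bound (x : nat -> R) c : eventually (fun n => Rabs (x n) <= c * / INR n) -> is_lim_seq x 0.
Proof.
  intros H.
  apply (is_lim_seq_le_le_loc (fun n => (- c) * / INR n) x (fun n => c * / INR n)); auto using lim_inv_n.
  destruct H as [N HN]. exists N. intros n Hn. specialize (HN n Hn). apply Rabs_le_between in HN. lra.
Qed.

Lemma zetaZ u : Cinv (ihara_zeta Z_nb Z.eqb 0%Z u) = (1, 0).
Proof.
  unfold ihara_zeta, CSeries.
  rewrite (Series_ext _ (fun _ => 0 * 1)), (Series_ext (fun k => Im _) (fun _ => 0 * 1)).
  - rewrite Series_scal_l, Rmult_0_l. unfold Cexp, Cinv, Re, Im; simpl fst; simpl snd.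
    rewrite exp_0, cos_0, sin_0. f_equal; field.
  - intros [|k]; unfold Im. simpl; ring. rewrite snd_RtoC_mult, Z_zero. simpl INR. unfold Rdiv; ring.
  - intros [|k]; unfold Re. simpl; ring. rewrite fst_RtoC_mult, Z_zero. simpl INR. unfold Rdiv; ring.
Qed.

Lemma cont_pt_exp_neg x : continuity_pt (fun x => exp (- x)) x.
Proof. apply continuity_pt_filterlim. apply (ex_derive_continuous (fun x => exp (- x))). auto_derive. exact I. Qed.
Lemma cont_pt_cos_neg x : continuity_pt (fun x => cos (- x)) x.
Proof. apply continuity_pt_filterlim. apply (ex_derive_continuous (fun x => cos (- x))). auto_derive. exact I. Qed.
Lemma cont_pt_sin_neg x : continuity_pt (fun x => sin (- x)) x.
Proof. apply continuity_pt_filterlim. apply (ex_derive_continuous (fun x => sin (- x))). auto_derive. exact I. Qed.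

Theorem corollary2 (u : C) (hu : Cmod u < 1) :
  filterlim (fun n : nat => Cinv (ihara_zeta (cycle_nb n) Nat.eqb 0%nat u))
            eventually
            (locally (Cinv (ihara_zeta Z_nb Z.eqb 0%Z u)))
  /\ Cinv (ihara_zeta Z_nb Z.eqb 0%Z u)
     = Cexp (mu_integral (fun lam : R =>
          Clog (1 - 2 * u + u * u + RtoC lam * u)%C)).
Proof.
  split.
  - rewrite zetaZ.
    set (r := Cmod u) in *. assert (Hr : 0 <= r) by apply Cmod_ge_0.
    set (x := fun n : nat => Series (fun k => Re (coef (Defs.N0 (cycle_nb n) Nat.eqb 0%nat) u k))).
    set (y := fun n : nat => Series (fun k => Im (coef (Defs.N0 (cycle_nb n) Nat.eqb 0%nat) u k))).
    assert (Hb : forall n, (3 <= n)%nat ->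
      (forall k, Rabs (fst (coef (Defs.N0 (cycle_nb n) Nat.eqb 0%nat) u k)) <= 2 / INR n * r ^ k) /\
      (forall k, Rabs (snd (coef (Defs.N0 (cycle_nb n) Nat.eqb 0%nat) u k)) <= 2 / INR n * r ^ k)).
    { intros n Hn. split; intros k; apply (coef_bound _ u n k Hn); auto using cyc_le2, cyc_zero. }
    assert (Lx : is_lim_seq x 0).
    { apply (lim_seq_bound _ (2 / (1 - r))). exists 3%nat. intros n Hn.
      eapply Rle_trans. apply (series_bound _ (2 / INR n) r). lra. apply (proj1 (Hb n Hn)).
      right. field. repeat split; try lra; apply not_0_INR; lia. }
    assert (Ly : is_lim_seq y 0).
    { apply (lim_seq_bound _ (2 / (1 - r))). exists 3%nat. intros n Hn.
      eapply Rle_trans. apply (series_bound _ (2 / INR n) r). lra. apply (proj2 (Hb n Hn)).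
      right. field. repeat split; try lra; apply not_0_INR; lia. }
    apply lim_C.
    + change (fst (1,0)) with 1. apply (is_lim_seq_ext (fun n => exp (- x n) * cos (- y n))).
      { intros n. unfold ihara_zeta. rewrite CinvCexp. reflexivity. }
      replace (Finite 1) with (Finite (exp (- 0) * cos (- 0))) by (f_equal; rewrite Ropp_0, exp_0, cos_0; ring).
      apply is_lim_seq_mult'.
      apply (is_lim_seq_continuous (fun x => exp (- x))). apply cont_pt_exp_neg. exact Lx.
      apply (is_lim_seq_continuous (fun x => cos (- x))). apply cont_pt_cos_neg. exact Ly.
    + change (snd (1,0)) with 0. apply (is_lim_seq_ext (fun n => exp (- x n) * sin (- y n))).
      { intros n. unfold ihara_zeta. rewrite CinvCexp. reflexivity. }
      replace (Finite 0) with (Finite (exp (- 0) * sin (- 0))) by (f_equal; rewrite Ropp_0, sin_0; ring).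
      apply is_lim_seq_mult'.
      apply (is_lim_seq_continuous (fun x => exp (- x))). apply cont_pt_exp_neg. exact Lx.
      apply (is_lim_seq_continuous (fun x => sin (- x))). apply cont_pt_sin_neg. exact Ly.
  - rewrite zetaZ. unfold mu_integral.
    rewrite (is_RInt_unique _ _ _ _ (int_zero u hu)).
    unfold scal; simpl. unfold prod_scal, scal; simpl. unfold mult; simpl.
    unfold Cexp, Re, Im; simpl. rewrite !Rmult_0_r, exp_0, cos_0, sin_0. f_equal; ring.
Qed.

Open Scope R_scope.
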